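(* Let $k$ be a field of characteristic zero, $A_1=k[t,\partial]$ the first Weyl algebra, $R=k[t]$, let $V$ be a primary decomposable subspace of $R$, let $p\in k[t]$ and $\sigma:=\exp(\mathrm{ad}(p))$. Then $\sigma(\mathcal{D}(R,V))=\mathcal{D}(R,V)$ if and only if $p\in S(V)$.
   Context: $A_1$ is the $k$-algebra generated by $t,\partial$ with $\partial t-t\partial=1$. Elements of $k(t)[\partial]$ act as $k$-linear endomorphisms of $k(t)$ (with $\partial$ acting as the derivative). For $k$-subspaces $V,W\subseteq k(t)$, $\mathcal{D}(V,W):=\{d\in k(t)[\partial]: d(V)\subseteq W\}$. For $b\in R$, $\mathcal{O}(b):=\{a\in R: a'\in bR\}$ ($a'$ the formal derivative), and for a subspace $V\subseteq R$, $S(V):=\{a\in R: aV\subseteq V\}$. A non-zero $k$-subspace $V$ of $R$ is primary decomposable if $S(V)$ contains $\mathcal{O}(b)$ for some $b\neq 0$. For $p\in R$, $\exp(\mathrm{ad}(p))$ is the automorphism of $A_1$ given by $d\mapsto d+[d,p]+\frac{1}{2!}[[d,p],p]+\frac{1}{3!}[[[d,p],p],p]+\cdots$, where $[d,p]=dp-pd$ (a finite sum since $d\mapsto[d,p]$ is locally nilpotent). *)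

(* Defs.v *)
From HB Require Import structures.
From mathcomp Require Import all_boot all_order all_algebra.
Set Implicit Arguments. Unset Strict Implicit. Unset Printing Implicit Defensive.
Import GRing.Theory.
Local Open Scope ring_scope.

Section WeylDefs.
Variable k : fieldType.

Definition Kt := {fraction {poly k}}.

Definition derF (x : Kt) : Kt :=
  let r := repr x in
  (tofrac (\n_r)^`()) / tofrac \d_r
  - tofrac \n_r * tofrac (\d_r)^`() / (tofrac \d_r) ^+ 2.

(* Elements of k(t)[\partial] are represented by their coefficient list:
   d = \sum_i d`_i \partial^i, stored as a polynomial in 'X = \partial over k(t). *)
Definition diffop := {poly Kt}.

Definition act (d : diffop) (f : Kt) : Kt :=
  \sum_(i < size d) d`_i * iter i derF f.

(* product in k(t)[\partial]:  (a \partial^i)(b \partial^j)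
   = \sum_l C(i,l) a b^(l) \partial^(i+j-l) *)
Definition mulD (d e : diffop) : diffop :=
  \sum_(i < size d) \sum_(j < size e) \sum_(l < i.+1)
     ('C(i, l)%:R * d`_i * iter l derF e`_j) *: 'X^(i + j - l).

Definition commD (d e : diffop) : diffop := mulD d e - mulD e d.

Definition adp (p : {poly k}) (d : diffop) : diffop := commD d (tofrac p)%:P.

(* sigma = exp(ad p): d |-> \sum_n (1/n!) [..[d,p],..,p]; the terms with n >= size d
   vanish (ad p lowers the order by one), so the sum is truncated there. *)
Definition sigma (p : {poly k}) (d : diffop) : diffop :=
  \sum_(n < size d) (n`!%:R)^-1 *: iter n (adp p) d.

Definition Dop (V W : Kt -> Prop) : diffop -> Prop :=
  fun d => forall f, V f -> W (act d f).

Definition RinKt : Kt -> Prop := fun f => exists r : {poly k}, f = tofrac r.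
Definition inKt (V : {poly k} -> Prop) : Kt -> Prop :=
  fun f => exists v, V v /\ f = tofrac v.

Definition Ob (b : {poly k}) : {poly k} -> Prop :=
  fun a => exists q, a^`() = b * q.

Definition SV (V : {poly k} -> Prop) : {poly k} -> Prop :=
  fun a => forall v, V v -> V (a * v).

Definition is_subspace (V : {poly k} -> Prop) : Prop :=
  V 0 /\ (forall (c : k) u v, V u -> V v -> V (c *: u + v)).

Definition primary_decomposable (V : {poly k} -> Prop) : Prop :=
  is_subspace V /\ (exists v, V v /\ v <> 0) /\
  exists b : {poly k}, b <> 0 /\ (forall a, Ob b a -> SV V a).

End WeylDefs.

(* Main.v *)
Require Import Defs.
From HB Require Import structures.
From mathcomp Require Import all_boot all_order all_algebra.
From mathcomp Require Import ring.
Set Implicit Arguments. Unset Strict Implicit. Unset Printing Implicit Defensive.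
Import GRing.Theory.
Local Open Scope ring_scope.
Lemma sum_wide (V : nmodType) (n1 n2 : nat) (F : nat -> V) : (n1 <= n2)%N ->
  (forall i : nat, (n1 <= i)%N -> F i = 0) -> \sum_(i < n1) F i = \sum_(i < n2) F i.
Proof.
move=> le H; rewrite (big_ord_widen n2 F le) big_mkcond; apply: eq_bigr => i _.
by case: ifP => // /negbT; rewrite -leqNgt => /H ->.
Qed.
Section Comb.
Variable F : fieldType.
Hypothesis hfact : forall n, (n`!%:R : F) != 0.

Lemma kron_sum (B : nat) (g : nat -> F) (N M : nat) : (M < B)%N ->
  \sum_(n < B) g n * ((n + N)%N == M)%:R = (N <= M)%N%:R * g (M - N)%N.
Proof.
move=> hM.
case: (leqP N M) => hNM.
  have hb : (M - N < B)%N by apply: leq_ltn_trans (leq_subr _ _) hM.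
  rewrite (bigD1 (Ordinal hb)) //= subnK // eqxx mulr1 mul1r big1 ?addr0 //.
  move=> n hn; have -> : ((n + N)%N == M) = false; last by rewrite mulr0.
  apply/negbTE; apply: contra hn => /eqP E; apply/eqP; apply: val_inj => /=.
  by rewrite -E addnK.
rewrite mul0r big1 // => n _; have -> : ((n + N)%N == M) = false; last by rewrite mulr0.
apply/negbTE; apply/eqP => E; move: hNM; rewrite -E ltnNge leq_addl.
by [].
Qed.

Lemma fact_split (M i : nat) : (i <= M)%N ->
  (M`!%:R : F)^-1 * 'C(M, i)%:R = (((M - i)%N)`!%:R)^-1 * (i`!%:R)^-1.
Proof.
move=> hi.
have E : (M`!%:R : F) = 'C(M, i)%:R * (i`!%:R * (M - i)`!%:R).
  by rewrite -!natrM bin_fact.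
have hC : ('C(M, i)%:R : F) != 0.
  by apply: contraNneq (hfact M) => hC; rewrite E hC mul0r.
rewrite E; field.
by rewrite hC !hfact.
Qed.

Lemma coef_ident (a : F) (B M : nat) : (M < B)%N ->
  \sum_(n < B) \sum_(N < B) ((n`!%:R)^-1 * (a ^+ N * (N`!%:R)^-1)) * ((n + N)%N == M)%:R
  = (a + 1) ^+ M * (M`!%:R)^-1.
Proof.
move=> hM.
rewrite exchange_big /=.
under eq_bigr => N _.
  under eq_bigr => n _ do rewrite mulrAC.
  rewrite -big_distrl /= (@kron_sum B (fun n => (n`!%:R)^-1) N M hM).
  over.
rewrite /=.
pose G := fun N : nat => (N <= M)%N%:R / ((M - N)%N)`!%:R * (a ^+ N / N`!%:R).
have HG : \sum_(N < M.+1) G N = \sum_(N < B) G N.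
  apply: sum_wide => // i hi; rewrite /G ltnNge in hi *.
  by rewrite (negbTE hi) mul0r mul0r.
transitivity (\sum_(N < B) G N); first by [].
rewrite -HG /G.
rewrite addrC exprDn mulr_suml; apply: eq_bigr => i _.
have hi : (i <= M)%N by rewrite -ltnS.
rewrite hi expr1n mul1r -(mulr_natr (a ^+ i)).
rewrite [RHS](_ : _ = a ^+ i * ((M`!%:R)^-1 * 'C(M, i)%:R)); last by ring.
rewrite (fact_split hi) /= mul1r; ring.
Qed.

End Comb.
Section Vander.
Variables (K F : fieldType) (f : {rmorphism K -> F}).
Hypothesis hK : forall n : nat, (n > 0)%N -> (n%:R : K) != 0.
Variable W : F -> Prop.
Hypothesis W0 : W 0.
Hypothesis Wcomb : forall c x z, W x -> W z -> W (f c * x + z).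

Lemma W_sum (B : nat) (c : 'I_B -> K) (x : 'I_B -> F) :
  (forall j, W (x j)) -> W (\sum_(j < B) f (c j) * x j).
Proof.
move=> H; elim/big_rec: _ => // j z _ hz; exact: Wcomb.
Qed.

Lemma vander_extract (B : nat) (y : nat -> F) :
  (forall j : nat, (j < B)%N -> W (\sum_(N < B) (j%:R)^+N * y N)) ->
  forall N : nat, (N < B)%N -> W (y N).
Proof.
move=> H N' hN'.
pose M : 'M[K]_B := \matrix_(N < B, j < B) (j%:R : K) ^+ N.
have hM : M \in unitmx.
  rewrite unitmxE unitfE.
  have -> : M = Vandermonde B (\row_(j < B) (j%:R : K)).
    by apply/matrixP => i j; rewrite !mxE.
  rewrite det_Vandermonde; apply/prodf_neq0 => i _; apply/prodf_neq0 => j hij.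
  rewrite !mxE -natrB; last exact: ltnW.
  by apply: hK; rewrite subn_gt0.
pose Mi := invmx M.
have E : y N' = \sum_(j < B) f (Mi j (Ordinal hN')) * \sum_(N < B) (j%:R)^+N * y N.
  under eq_bigr => j _ do rewrite mulr_sumr.
  rewrite exchange_big /=.
  have -> : y N' = \sum_(N < B) f ((M *m Mi) N (Ordinal hN')) * y N.
    rewrite mulmxV // (bigD1 (Ordinal hN')) //= !mxE eqxx rmorph1 mul1r big1 ?addr0 //.
    by move=> N hN; rewrite !mxE (negbTE hN) rmorph0 mul0r.
  apply: eq_bigr => N _; rewrite !mxE rmorph_sum mulr_suml; apply: eq_bigr => j _.
  by rewrite rmorphM !mxE rmorphXn rmorph_nat mulrAC [RHS]mulrC.
rewrite E; apply: W_sum => j; exact: H.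
Qed.
End Vander.
Section Frac.
Variable k : fieldType.
Local Notation tf := (@tofrac {poly k}).
Local Notation D := (@derF k).

Lemma reprE (x : Kt k) : x * tf (\d_(repr x)) = tf (\n_(repr x)).
Proof.
rewrite -{1}[x]reprK.
case: (repr x) => [[n d] /= hd].
unlock tofrac.
rewrite /=.
transitivity ((\pi_({fraction {poly k}})%qT) (FracField.mulf (@mkRatio _ (n, d) hd) (Ratio d 1))).
  exact: esym (FracField.pi_mul _ _).
apply/eqmodP => /=.
rewrite FracField.equivfE /= /FracField.mulf /= !numden_Ratio ?mulr1 ?mul1r ?oner_neq0 ?mulf_neq0 ?oner_neq0 //.
by rewrite mulrC.
Qed.

Lemma tf_neq0 (d : {poly k}) : d != 0 -> tf d != 0.
Proof. by rewrite tofrac_eq0. Qed.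

Lemma tf_inj : injective tf.
Proof. by move=> a b /eqP; rewrite tofrac_eq => /eqP. Qed.

Lemma quot_rule (a0 d0 a d : {poly k}) : a0 * d = a * d0 ->
  (a0^`() * d0 - a0 * d0^`()) * d ^+ 2 = (a^`() * d - a * d^`()) * d0 ^+ 2.
Proof.
move=> E.
have E' : a0^`() * d + a0 * d^`() = a^`() * d0 + a * d0^`().
  by rewrite -!derivM E.
apply/eqP; rewrite -subr_eq0; apply/eqP.
transitivity (d0 * d * ((a0^`() * d + a0 * d^`()) - (a^`() * d0 + a * d0^`()))
   - (d^`() * d0 + d * d0^`()) * (a0 * d - a * d0)); first by ring.
by rewrite E E' !subrr mulr0 mulr0 subr0.
Qed.

Lemma gen_rep (F : fieldType) (n d n0 d0 n' d' n0' d0' : F) :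
  d != 0 -> d0 != 0 ->
  (n0' * d0 - n0 * d0') * d ^+ 2 = (n' * d - n * d') * d0 ^+ 2 ->
  n0' / d0 - n0 * d0' / d0 ^+ 2 = (n' * d - n * d') / d ^+ 2.
Proof.
move=> hd hd0 Q.
have -> : n0' / d0 - n0 * d0' / d0 ^+ 2 = (n0' * d0 - n0 * d0') * d ^+ 2 / (d0 ^+ 2 * d ^+ 2).
  by field; rewrite hd hd0.
rewrite Q. by field; rewrite hd hd0.
Qed.

Lemma derF_rep (x : Kt k) (n d : {poly k}) : d != 0 -> x * tf d = tf n ->
  D x = (tf n^`() * tf d - tf n * tf d^`()) / (tf d) ^+ 2.
Proof.
move=> hd hx.
rewrite /derF.
set n0 := \n_(repr x); set d0 := \d_(repr x).
have hd0 : d0 != 0 := denom_ratioP (repr x).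
have hx0 : x * tf d0 = tf n0 := reprE x.
have E : n0 * d = n * d0.
  apply: tf_inj; rewrite !tofracM -hx -hx0 -!mulrA; congr (x * _); exact: mulrC.
have Q := quot_rule E.
apply: gen_rep; try exact: tf_neq0.
by rewrite -!(tofracM, tofracB, tofracXn) Q.
Qed.

Lemma derF_tf (r : {poly k}) : D (tf r) = tf r^`().
Proof.
rewrite (@derF_rep (tf r) r 1) ?oner_neq0 ?tofrac1 ?mulr1 //.
by rewrite derivC tofrac0 mulr0 subr0 expr1n divr1.
Qed.

Lemma repr_ex (x : Kt k) : exists n d, d != 0 /\ x * tf d = tf n.
Proof. exists (\n_(repr x)), (\d_(repr x)); split; [exact: denom_ratioP | exact: reprE]. Qed.

Lemma gen_add (F : fieldType) (a b c e a' b' c' e' : F) : b != 0 -> e != 0 ->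
  (a' * b - a * b') / b ^+ 2 + (c' * e - c * e') / e ^+ 2 =
  ((a' * e + a * e' + (c' * b + c * b')) * (b * e) - (a * e + c * b) * (b' * e + b * e')) / (b * e) ^+ 2.
Proof. move=> hb he. by field; rewrite hb he. Qed.

Lemma gen_mul (F : fieldType) (a b c e a' b' c' e' : F) : b != 0 -> e != 0 ->
  ((a' * c + a * c') * (b * e) - (a * c) * (b' * e + b * e')) / (b * e) ^+ 2 =
  (a' * b - a * b') / b ^+ 2 * (c / e) + a / b * ((c' * e - c * e') / e ^+ 2).
Proof. move=> hb he. by field; rewrite hb he. Qed.

Lemma ringA1 (F : comRingType) (x y b e : F) : (x + y) * (b * e) = x * b * e + y * e * b.
Proof. ring. Qed.
Lemma ringA2 (F : comRingType) (x y b e : F) : x * y * (b * e) = x * b * (y * e).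
Proof. ring. Qed.

Lemma derF_add (x y : Kt k) : D (x + y) = D x + D y.
Proof.
have [a [b [hb ex]]] := repr_ex x; have [c [e [he ey]]] := repr_ex y.
rewrite (derF_rep hb ex) (derF_rep he ey).
rewrite (@derF_rep _ (a * e + c * b) (b * e)) ?mulf_neq0 //; last first.
  by rewrite !(tofracM, tofracD) -ex -ey; apply: ringA1.
rewrite !(derivM, derivD, tofracM, tofracD).
by symmetry; apply: gen_add; exact: tf_neq0.
Qed.

Lemma derF_mul (x y : Kt k) : D (x * y) = D x * y + x * D y.
Proof.
have [a [b [hb ex]]] := repr_ex x; have [c [e [he ey]]] := repr_ex y.
have tb := tf_neq0 hb; have te := tf_neq0 he.
have xE : x = tf a / tf b by rewrite -ex (mulfK tb).
have yE : y = tf c / tf e by rewrite -ey (mulfK te).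
rewrite (derF_rep hb ex) (derF_rep he ey).
rewrite (@derF_rep _ (a * c) (b * e)) ?mulf_neq0 //; last first.
  by rewrite !(tofracM) -ex -ey; apply: ringA2.
rewrite xE yE !(derivM, derivD, tofracM, tofracD).
apply: gen_mul; [exact: tb | exact: te].
Qed.

Lemma derF0 : D 0 = 0.
Proof. by rewrite -tofrac0 derF_tf deriv0 tofrac0. Qed.

Lemma derF_opp x : D (- x) = - D x.
Proof. by apply/eqP; rewrite -subr_eq0 opprK -derF_add addNr derF0. Qed.

End Frac.
Section Leib.
Variable k : fieldType.
Local Notation tf := (@tofrac {poly k}).
Local Notation D := (@derF k).
Local Notation Di n x := (iter n (@derF k) x).


Lemma derF_sum I (r : seq I) (P : pred I) (F : I -> Kt k) :
  D (\sum_(i <- r | P i) F i) = \sum_(i <- r | P i) D (F i).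
Proof.
elim: r => [|x r IH]; first by rewrite !big_nil derF0.
by rewrite !big_cons; case: (P x); rewrite ?derF_add IH.
Qed.

Lemma derF_mulrn x n : D (x *+ n) = D x *+ n.
Proof. by elim: n => [|n IH]; rewrite ?mulr0n ?derF0 // !mulrS derF_add IH. Qed.

Lemma iterD_add n x y : Di n (x + y) = Di n x + Di n y.
Proof. by elim: n => //= n ->; rewrite derF_add. Qed.

Lemma iterD0 n : Di n 0 = 0.
Proof. by elim: n => //= n ->; rewrite derF0. Qed.

Lemma iterD_opp n x : Di n (- x) = - Di n x.
Proof. by elim: n => //= n ->; rewrite derF_opp. Qed.

Lemma iterD_sub n x y : Di n (x - y) = Di n x - Di n y.
Proof. by rewrite iterD_add iterD_opp. Qed.

Lemma iterD_tf n r : Di n (tf r) = tf (r^`(n)).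
Proof. elim: n => [|n IH] //=. by rewrite IH derF_tf. Qed.

Lemma leibniz i (c g : Kt k) :
  Di i (c * g) = \sum_(0 <= l < i.+1) (Di l c * Di (i - l) g) *+ 'C(i, l).
Proof.
elim: i => [|i IH]; first by rewrite big_nat1 /= mulr1n.
rewrite [LHS]/= IH derF_sum.
under eq_bigr => l _ do rewrite derF_mulrn derF_mul mulrnDl.
rewrite big_split /= [RHS]big_nat_recl // bin0 mulr1n subn0.
under [in RHS]eq_bigr => l _ do rewrite binS mulrnDr subSS.
rewrite big_split /= addrC addrA; congr (_ + _).
rewrite [LHS]big_nat_recl // bin0 mulr1n subn0 [in RHS]big_nat_recr //= bin_small // mulr0n addr0.
congr (_ + _); rewrite !big_nat; apply: eq_bigr => l /andP [_ hl].
by rewrite [in RHS]/= -(subnSK hl).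
Qed.
End Leib.
Section Ops.
Variable k : fieldType.
Local Notation tf := (@tofrac {poly k}).
Local Notation D := (@derF k).
Local Notation Di n x := (iter n (@derF k) x).

Lemma act_wide (d : diffop k) f (N : nat) : (size d <= N)%N ->
  act d f = \sum_(i < N) d`_i * Di i f.
Proof.
move=> le; rewrite /act; apply: (@sum_wide _ _ _ (fun i : nat => d`_i * Di i f)) => // i hi.
by rewrite nth_default ?mul0r.
Qed.

Lemma act_add (a b : diffop k) f : act (a + b) f = act a f + act b f.
Proof.
set N := maxn (size a) (size b).
rewrite !(@act_wide _ _ N) ?leq_maxl ?leq_maxr //; last first.
  exact: leq_trans (size_add _ _) _.
by rewrite -big_split; apply: eq_bigr => i _; rewrite coefD mulrDl.
Qed.

Lemma act_scale (c : Kt k) (a : diffop k) f : act (c *: a) f = c * act a f.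
Proof.
rewrite !(@act_wide _ _ (size a)) ?size_scale_leq // mulr_sumr.
by apply: eq_bigr => i _; rewrite coefZ mulrA.
Qed.

Lemma act0 f : act (0 : diffop k) f = 0.
Proof. by rewrite /act size_poly0 big_ord0. Qed.

Lemma act_opp (a : diffop k) f : act (- a) f = - act a f.
Proof. by rewrite -scaleN1r act_scale mulN1r. Qed.

Lemma act_sub (a b : diffop k) f : act (a - b) f = act a f - act b f.
Proof. by rewrite act_add act_opp. Qed.

Lemma act_sum I (r : seq I) (P : pred I) (F : I -> diffop k) f :
  act (\sum_(i <- r | P i) F i) f = \sum_(i <- r | P i) act (F i) f.
Proof.
elim: r => [|x r IH]; first by rewrite !big_nil act0.
by rewrite !big_cons; case: (P x); rewrite ?act_add IH.
Qed.

Lemma act_monom (c : Kt k) n f : act (c *: 'X^n) f = c * Di n f.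
Proof.
rewrite act_scale (@act_wide _ _ n.+1) ?size_polyXn //.
rewrite big_ord_recr /= big1 ?add0r ?coefXn ?eqxx ?mul1r // => i _.
by rewrite coefXn (ltn_eqF (ltn_ord i)) mul0r.
Qed.

Lemma mulD_wide (d e : diffop k) (N M : nat) : (size d <= N)%N -> (size e <= M)%N ->
  mulD d e = \sum_(i < N) \sum_(j < M) \sum_(l < i.+1)
     ('C(i, l)%:R * d`_i * iter l (@derF k) e`_j) *: 'X^(i + j - l).
Proof.
move=> hN hM; rewrite /mulD.
transitivity (\sum_(i < size d) \sum_(j < M) \sum_(l < i.+1)
     ('C(i, l)%:R * d`_i * iter l (@derF k) e`_j) *: 'X^(i + j - l)).
  apply: eq_bigr => i _; apply: (@sum_wide _ _ _ (fun j : nat => \sum_(l < i.+1)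
     ('C(i, l)%:R * d`_i * iter l (@derF k) e`_j) *: 'X^(i + j - l))) => // j hj.
  by apply: big1 => l _; rewrite (nth_default _ hj) iterD0 mulr0 scale0r.
apply: (@sum_wide _ _ _ (fun i : nat => \sum_(j < M) \sum_(l < i.+1)
     ('C(i, l)%:R * d`_i * iter l (@derF k) e`_j) *: 'X^(i + j - l))) => // i hi.
by apply: big1 => j _; apply: big1 => l _; rewrite (nth_default _ hi) mulr0 mul0r scale0r.
Qed.

Definition Uop (p : {poly k}) (i : nat) : diffop k :=
  \sum_(l < i.+1) ('C(i, l)%:R * Di l (tf p)) *: 'X^(i - l) - tf p *: 'X^i.

Lemma adp_U p (x : diffop k) (N : nat) : (size x <= N)%N ->
  adp p x = \sum_(i < N) x`_i *: Uop p i.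
Proof.
move=> hN; rewrite /adp /commD.
rewrite (@mulD_wide x _ N 1) ?size_polyC_leq1 //.
rewrite (@mulD_wide _ x 1 N) ?size_polyC_leq1 //.
rewrite [X in _ - X]big_ord1 /=.
under eq_bigr => i _ do rewrite big_ord1.
rewrite -sumrB; apply: eq_bigr => i _.
rewrite /Uop scalerBr scaler_sumr; congr (_ - _).
  apply: eq_bigr => l _; rewrite coefC eqxx addn0 scalerA; congr (_ *: _).
  by rewrite mulrCA mulrA.
by rewrite big_ord1 coefC eqxx /= bin0 mul1r subn0 add0n scalerA mulrC.
Qed.
End Ops.
Section Ad.
Variable k : fieldType.
Local Notation tf := (@tofrac {poly k}).
Local Notation Di n x := (iter n (@derF k) x).
Variable p : {poly k}.
Local Notation ad := (@adp k p).

Lemma natmul_helper (F : comRingType) (x a b : F) n :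
  x * (a * b *+ n) = n%:R * a * x * b.
Proof. rewrite -mulr_natl; ring. Qed.

Lemma act_U i g : act (Uop p i) g = Di i (tf p * g) - tf p * Di i g.
Proof.
rewrite /Uop act_sub act_monom act_sum leibniz big_mkord; congr (_ - _).
apply: eq_bigr => l _; by rewrite act_monom -mulrA mulr_natl.
Qed.

Lemma act_adp (x : diffop k) g : act (ad x) g = act x (tf p * g) - tf p * act x g.
Proof.
rewrite (@adp_U _ _ _ (size x)) // act_sum (@act_wide _ x (tf p * g) _ (leqnn _)) (@act_wide _ x g _ (leqnn _)) mulr_sumr -sumrB.
by apply: eq_bigr => i _; rewrite act_scale act_U mulrBr mulrCA.
Qed.

Lemma size_sum_le I (r : seq I) (P : pred I) (F : I -> diffop k) (n : nat) :
  (forall i, P i -> (size (F i) <= n)%N) -> (size (\sum_(i <- r | P i) F i)%R <= n)%N.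
Proof.
move=> H; elim/big_ind: _ => //; first by rewrite size_poly0.
by move=> a b ha hb; apply: leq_trans (size_add _ _) _; rewrite geq_max ha hb.
Qed.

Lemma size_U (i : nat) : (size (Uop p i) <= i)%N.
Proof.
rewrite /Uop big_ord_recl /= bin0 mul1r subn0 addrAC subrr add0r; apply: size_sum_le => l _.
apply: leq_trans (size_scale_leq _ _) _; rewrite size_polyXn.
by case: i l => [|i] l; [case: l | rewrite subSS ltnS leq_subr].
Qed.
Lemma size_adp (x : diffop k) : (size (ad x) <= (size x).-1)%N.
Proof.
rewrite (@adp_U _ _ _ (size x)) //; apply: size_sum_le => i _.
apply: leq_trans (size_scale_leq _ _) _; apply: leq_trans (size_U _) _.
by case: (size x) i => [[]|n] i //=; rewrite -ltnS.
Qed.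

Lemma iter_ad0 (n : nat) (x : diffop k) : (size x <= n)%N -> iter n ad x = 0.
Proof.
elim: n x => [|n IH] x hx; first by apply/eqP; rewrite -size_poly_eq0; case: (size x) hx.
rewrite iterSr; apply: IH; apply: leq_trans (size_adp x) _.
by case: (size x) hx.
Qed.

Lemma adp_add (x y : diffop k) : ad (x + y) = ad x + ad y.
Proof.
set N := maxn (size x) (size y).
rewrite !(@adp_U _ _ _ N) ?leq_maxl ?leq_maxr //; last first.
  exact: leq_trans (size_add _ _) _.
by rewrite -big_split; apply: eq_bigr => i _; rewrite coefD scalerDl.
Qed.

Lemma adp_scale (c : Kt k) (x : diffop k) : ad (c *: x) = c *: ad x.
Proof.
rewrite !(@adp_U _ _ _ (size x)) ?size_scale_leq // scaler_sumr.
by apply: eq_bigr => i _; rewrite coefZ scalerA.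
Qed.

Lemma adp0 : ad 0 = 0.
Proof. by rewrite (@adp_U _ _ _ 0) ?size_poly0 // big_ord0. Qed.

Lemma iter_ad_add n x y : iter n ad (x + y) = iter n ad x + iter n ad y.
Proof. by elim: n => //= n ->; rewrite adp_add. Qed.

Lemma iter_ad_scale n c x : iter n ad (c *: x) = c *: iter n ad x.
Proof. by elim: n => //= n ->; rewrite adp_scale. Qed.

Lemma iter_ad0' n : iter n ad 0 = 0.
Proof. by elim: n => //= n ->; rewrite adp0. Qed.

Lemma iter_ad_sum n I (r : seq I) (P : pred I) (F : I -> diffop k) :
  iter n ad (\sum_(i <- r | P i) F i) = \sum_(i <- r | P i) iter n ad (F i).
Proof.
elim: r => [|x r IH]; first by rewrite !big_nil iter_ad0'.
by rewrite !big_cons; case: (P x); rewrite ?iter_ad_add IH.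
Qed.
End Ad.
Section Sig.
Variable k : fieldType.
Hypothesis chark0 : [pchar k] =i pred0.
Local Notation tf := (@tofrac {poly k}).
Variable p : {poly k}.
Local Notation ad := (@adp k p).

Lemma natK_neq0 (n : nat) : (n > 0)%N -> (n%:R : k) != 0.
Proof. by move=> hn; rewrite (GRing.pcharf0P _).1 // -lt0n. Qed.

Lemma natKt_neq0 (n : nat) : (n > 0)%N -> (n%:R : Kt k) != 0.
Proof.
move=> hn; rewrite -(rmorph_nat (@tofrac {poly k})) tofrac_eq0 -polyC_natr polyC_eq0.
exact: natK_neq0.
Qed.

Lemma factKt n : (n`!%:R : Kt k) != 0.
Proof. by apply: natKt_neq0; exact: fact_gt0. Qed.

Definition Sop (a : Kt k) (e : diffop k) : diffop k :=
  \sum_(N < size e) (a ^+ N * (N`!%:R)^-1) *: iter N ad e.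

Lemma size_iter_ad (n : nat) (x : diffop k) : (size (iter n ad x) <= size x)%N.
Proof.
elim: n => //= n IH; apply: leq_trans (size_adp _ _) _.
by apply: leq_trans IH; rewrite leq_pred.
Qed.

Lemma Sop_wide (a : Kt k) (e : diffop k) (B : nat) : (size e <= B)%N ->
  Sop a e = \sum_(N < B) (a ^+ N * (N`!%:R)^-1) *: iter N ad e.
Proof.
move=> hB; rewrite /Sop; apply: (@sum_wide _ _ _ (fun N : nat => (a ^+ N * (N`!%:R)^-1) *: iter N ad e)) => // i hi.
by rewrite iter_ad0 // scaler0.
Qed.

Lemma sigma_wide (y : diffop k) (B : nat) : (size y <= B)%N ->
  sigma p y = \sum_(n < B) (n`!%:R)^-1 *: iter n ad y.
Proof.
move=> hB; rewrite /sigma; apply: (@sum_wide _ _ _ (fun n : nat => (n`!%:R)^-1 *: iter n ad y)) => // i hi.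
by rewrite iter_ad0 // scaler0.
Qed.

Lemma size_Sop (a : Kt k) (e : diffop k) : (size (Sop a e) <= size e)%N.
Proof.
apply: size_sum_le => i _; apply: leq_trans (size_scale_leq _ _) _.
exact: size_iter_ad.
Qed.

Lemma kron_vec (A : nat -> diffop k) (B j : nat) :
  (forall i : nat, (B <= i)%N -> A i = 0) ->
  A j = \sum_(M < B) (j == M)%:R *: A M.
Proof.
move=> H; case: (ltnP j B) => hj.
  rewrite (bigD1 (Ordinal hj)) //= eqxx scale1r big1 ?addr0 //.
  move=> M hM; have -> : (j == M) = false; last by rewrite scale0r.
  by apply/negbTE; apply: contra hM => /eqP E; apply/eqP; apply: val_inj.
rewrite H // big1 // => M _; have -> : (j == M) = false; last by rewrite scale0r.
by apply/negbTE; apply/eqP => E; move: hj; rewrite E leqNgt ltn_ord.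
Qed.

Lemma Sop_shift (a : Kt k) (e : diffop k) : sigma p (Sop a e) = Sop (a + 1) e.
Proof.
set B := size e.
rewrite (sigma_wide (size_Sop a e)) /Sop -/B.
have A0 : forall i : nat, (B <= i)%N -> iter i ad e = 0 by move=> i hi; exact: iter_ad0.
transitivity (\sum_(n < B) \sum_(N < B) \sum_(M < B)
   (((n`!%:R)^-1 * (a ^+ N * (N`!%:R)^-1)) * ((n + N)%N == M)%:R) *: iter M ad e).
  apply: eq_bigr => n _; rewrite iter_ad_sum scaler_sumr; apply: eq_bigr => N _.
  rewrite iter_ad_scale scalerA -iterD (@kron_vec (fun i => iter i ad e) B (n + N) A0).
  by rewrite scaler_sumr; apply: eq_bigr => M _; rewrite scalerA.
under eq_bigr => n _ do rewrite exchange_big /=.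
rewrite exchange_big /=; apply: eq_bigr => M _.
under eq_bigr => n _ do rewrite -scaler_suml.
rewrite -scaler_suml; congr (_ *: _).
exact: (coef_ident factKt).
Qed.

Lemma Sop0 (e : diffop k) : Sop 0 e = e.
Proof.
rewrite /Sop; case hs: (size e) => [|n].
  by rewrite big_ord0; apply/esym/eqP; rewrite -size_poly_eq0 hs.
rewrite big_ord_recl /= expr0 mul1r invr1 scale1r big1 ?addr0 // => i _.
by rewrite expr0n /= mul0r scale0r.
Qed.

Lemma Sop1 (e : diffop k) : Sop 1 e = sigma p e.
Proof. by rewrite /Sop /sigma; apply: eq_bigr => i _; rewrite expr1n mul1r. Qed.

End Sig.

Section MainSec.
Variable k : fieldType.
Hypothesis chark0 : [pchar k] =i pred0.
Local Notation tf := (@tofrac {poly k}).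
Definition kap : {rmorphism k -> Kt k} := (@tofrac {poly k}) \o polyC.
Variable V : {poly k} -> Prop.
Hypothesis HV : is_subspace V.

Lemma V0 : V 0. Proof. by case: HV. Qed.
Lemma Vcomb c u w : V u -> V w -> V (c *: u + w). Proof. by case: HV => _; apply. Qed.
Lemma Vscale c u : V u -> V (c *: u).
Proof. by move=> hu; rewrite -[_ *: _]addr0; apply: Vcomb => //; exact: V0. Qed.
Lemma Vsub u w : V u -> V w -> V (u - w).
Proof. by move=> hu hw; rewrite addrC -scaleN1r; apply: Vcomb. Qed.

Local Notation W := (inKt V).

Lemma W0 : W 0. Proof. by exists 0; split; [exact: V0 | rewrite tofrac0]. Qed.

Lemma Wcomb c x z : W x -> W z -> W (kap c * x + z).
Proof.
move=> [u [hu ->]] [w [hw ->]]; exists (c *: u + w); split; first exact: Vcomb.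
by rewrite /kap /= -mul_polyC tofracD tofracM.
Qed.

Local Notation DD := (Dop (@RinKt k) W).

Lemma Dcomb c x z : DD x -> DD z -> DD (kap c *: x + z).
Proof.
move=> hx hz f hf; rewrite act_add act_scale; apply: Wcomb; [exact: hx | exact: hz].
Qed.

Lemma D0 : DD 0.
Proof. by move=> f _; rewrite act0; exact: W0. Qed.

Lemma Dsum (B : nat) (c : 'I_B -> k) (x : 'I_B -> diffop k) :
  (forall i, DD (x i)) -> DD (\sum_(i < B) kap (c i) *: x i).
Proof.
move=> H; elim/big_rec: _ => [|i z _ hz]; first exact: D0.
exact: Dcomb.
Qed.

Lemma Dad p x : SV V p -> DD x -> DD (adp p x).
Proof.
move=> hp hx f [r ->]; rewrite act_adp.
have [w1 [hw1 E1]] := hx (tf (p * r)) (ex_intro _ _ erefl).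
have [w2 [hw2 E2]] := hx (tf r) (ex_intro _ _ erefl).
exists (w1 - p * w2); split; first by apply: Vsub => //; exact: hp.
by rewrite -tofracM E1 E2 tofracB tofracM.
Qed.

Lemma Dad_iter p n x : SV V p -> DD x -> DD (iter n (adp p) x).
Proof. by move=> hp hx; elim: n => //= n IH; exact: Dad. Qed.

Lemma kapS (a : k) (N : nat) : kap a ^+ N * (N`!%:R)^-1 = kap (a ^+ N * (N`!%:R)^-1).
Proof. by rewrite rmorphM rmorphXn fmorphV rmorph_nat. Qed.

Lemma DSop p (a : k) x : SV V p -> DD x -> DD (Sop p (kap a) x).
Proof.
move=> hp hx; rewrite /Sop.
under eq_bigr => N _ do rewrite kapS.
exact: (@Dsum _ (fun N : 'I_(size x) => a ^+ N * (N`!%:R)^-1) (fun N : 'I_(size x) => iter N (adp p) x)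
  (fun i => Dad_iter i hp hx)).
Qed.

Section Dv.
Variables (b v : {poly k}).
Hypothesis hb : b != 0.
Hypothesis Hb : forall a, Ob b a -> SV V a.
Hypothesis hv : V v.
Let m := (size b).-1.
Definition cpoly (j : nat) : {poly k} := (-1) ^+ j *: b^`(m - j).
Definition uop (r : {poly k}) : {poly k} := \sum_(j < m.+1) cpoly j * r^`(j).

Lemma sizeb : size b = m.+1.
Proof. by rewrite /m prednK // lt0n size_poly_eq0. Qed.

Lemma uop_deriv r : (uop r)^`() = b * ((-1) ^+ m *: r^`(m.+1)).
Proof.
pose K (j : nat) : {poly k} := (-1) ^+ j *: (b^`(m.+1 - j) * r^`(j)).
rewrite /uop raddf_sum.
transitivity (\sum_(j < m.+1) (K j - K j.+1)).
  apply: eq_bigr => j _; change ((cpoly j * r^`(j))^`() = K j - K j.+1).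
  rewrite derivM /cpoly derivZ -derivnS /K.
  have hj : (j <= m)%N by rewrite -ltnS.
  rewrite -subSn // subSS exprS mulN1r scaleNr opprK -!scalerAl -derivnS.
  by [].
rewrite -(big_mkord xpredT (fun j => K j - K j.+1)).
have -> : \sum_(0 <= j < m.+1) (K j - K j.+1) = \sum_(0 <= j < m.+1) ((- K j.+1) - (- K j)).
  by apply: eq_bigr => j _; rewrite opprK addrC.
rewrite telescope_sumr // opprK /K subn0 subnn derivn0.
rewrite (@derivn_poly0 _ b m.+1); last by rewrite sizeb.
by rewrite mul0r scaler0 addr0 exprS mulN1r scaleNr opprK scalerAr.
Qed.

Lemma uop1 : uop 1 = b^`(m).
Proof.
rewrite /uop big_ord_recl /= /cpoly expr0 scale1r subn0 mulr1 big1 ?addr0 // => j _.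
by rewrite -derivnS -polyC1 derivnC /= mulr0.
Qed.

Lemma bm_const : b^`(m) = (b`_m *+ m`!)%:P.
Proof.
apply/polyP => i; rewrite coef_derivn coefC.
case: i => [|i] /=; first by rewrite addn0 ffactnn.
rewrite nth_default ?mul0rn // sizeb; rewrite -addSnnS; exact: leq_addr.
Qed.

Lemma gamma_neq0 : b`_m *+ m`! != 0.
Proof.
rewrite -mulr_natr mulf_neq0 //; last by apply: natK_neq0 => //; exact: fact_gt0.
have : lead_coef b != 0 by rewrite lead_coef_eq0.
by rewrite lead_coefE sizeb.
Qed.

Definition ev : diffop k := \poly_(j < m.+1) tf (v * cpoly j).

Lemma act_ev r : act ev (tf r) = tf (v * uop r).
Proof.
rewrite (@act_wide _ ev _ m.+1) ?size_poly // /uop mulr_sumr rmorph_sum.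
apply: eq_bigr => j _; rewrite coef_poly ltn_ord iterD_tf -tofracM mulrA.
by [].
Qed.

Lemma uop_SV r : SV V (uop r).
Proof. apply: Hb; exists ((-1) ^+ m *: r^`(m.+1)); exact: uop_deriv. Qed.

Lemma D_ev : DD ev.
Proof.
move=> f [r ->]; rewrite act_ev; exists (v * uop r); split => //.
by rewrite mulrC; apply: uop_SV.
Qed.

Lemma key p : (forall x, DD x -> DD (sigma p x)) -> V (p * v).
Proof.
move=> Hs.
have HS : forall j : nat, DD (Sop p (j%:R) ev).
  elim => [|j IH]; first by rewrite mulr0n Sop0; exact: D_ev.
  by rewrite mulrSr -(Sop_shift chark0); apply: Hs.
have Hy : W (act (adp p ev) (tf 1)).
  case: (ltnP 1 (size ev)) => hB; last first.
    have h0 : adp p ev = 0 := @iter_ad0 _ p 1 ev hB.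
    by rewrite h0 act0; exact: W0.
  have HH : W ((1`!%:R)^-1 * act (iter 1 (adp p) ev) (tf 1)).
    apply: (@vander_extract k (Kt k) kap (natK_neq0 chark0) W W0 Wcomb (size ev)
      (fun N => (N`!%:R)^-1 * act (iter N (adp p) ev) (tf 1)) _ 1 hB).
    move=> j hj; have := HS j (tf 1) (ex_intro _ 1 erefl).
    rewrite /Sop act_sum; congr W; apply: eq_bigr => N _.
    by rewrite act_scale mulrA.
  by move: HH; rewrite /= mulr1n invr1 mul1r.
rewrite act_adp -tofracM mulr1 !act_ev uop1 bm_const in Hy.
case: Hy => w [hw Ew].
set g := b`_m *+ m`! in Ew.
have E : w = v * uop p - p * (v * g%:P).
  by apply: tf_inj; rewrite -Ew tofracB [tf (p * _)]tofracM.
have H1 : V (p * (v * g%:P)).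
  have -> : p * (v * g%:P) = v * uop p - w by rewrite E opprB addrC subrK.
  apply: Vsub => //; rewrite mulrC; exact: uop_SV.
have -> : p * v = g^-1 *: (p * (v * g%:P)).
  rewrite -mul_polyC.
  transitivity (p * v * (g^-1%:P * g%:P)); last by rewrite /=; ring.
  by rewrite -polyCM mulVf ?gamma_neq0 // polyC1 mulr1.
exact: Vscale.
Qed.

End Dv.

Lemma main_equiv p b : b != 0 -> (forall a, Ob b a -> SV V a) ->
  ((forall e : diffop k, DD e <-> exists d, DD d /\ sigma p d = e) <-> SV V p).
Proof.
move=> hb Hb; split.
- move=> H v hv; apply: (key hb Hb hv) => x hx.
  by apply: (H _).2; exists x.
- move=> hp e; split.
  + move=> he; exists (Sop p (-1) e); split.
      rewrite -(rmorphN1 kap); exact: DSop.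
    by rewrite (Sop_shift chark0) addNr Sop0.
  + case=> d [hd <-]; rewrite -Sop1 -(rmorph1 kap); exact: DSop.
Qed.


End MainSec.



Theorem theorem6 (k : fieldType) (chark0 : [pchar k] =i pred0)
  (V : {poly k} -> Prop) (p : {poly k}) :
  primary_decomposable V ->
  ((forall e : diffop k,
      Dop (@RinKt k) (inKt V) e <->
      exists d, Dop (@RinKt k) (inKt V) d /\ sigma p d = e)
   <-> SV V p).
Proof.
move=> [HV [_ [b [hb Hb]]]].
apply: (main_equiv chark0 HV p _ Hb).
by apply/eqP.
Qed.
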